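(* Let $K^2$ be the Klein bottle, with $\pi_1(K^2)\cong\langle a,b\mid aba^{-1}=b^{-1}\rangle$, and let $\rho:\pi_1(K^2)\to\mathrm{SL}_2(\mathbb C)$ be a representation. Then, up to conjugation, exactly one of the following holds: (1) $\rho(b)=\pm I$ and $\rho(a)$ is arbitrary; (2) $\rho(b)=\pm\begin{pmatrix}\lambda&0\\0&\lambda^{-1}\end{pmatrix}$ with $\lambda\neq\pm1$ and $\rho(a)=\pm\begin{pmatrix}0&1\\-1&0\end{pmatrix}$; (3) $\rho(b)=\pm\begin{pmatrix}1&1\\0&1\end{pmatrix}$ and $\rho(a)=\pm\begin{pmatrix}i&0\\0&-i\end{pmatrix}$. *)

(* Defs.v *)
From HB Require Import structures.
From mathcomp Require Import all_boot all_order all_algebra.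
From mathcomp Require Import complex.
From mathcomp Require Import reals.
Set Implicit Arguments. Unset Strict Implicit. Unset Printing Implicit Defensive.
Import Order.TTheory GRing.Theory Num.Theory.
Local Open Scope ring_scope.

Definition mx2 {T : nmodType} (a b c d : T) : 'M[T]_2 :=
  \matrix_(i < 2, j < 2)
    if (i == 0 :> nat) then (if (j == 0 :> nat) then a else b)
    else (if (j == 0 :> nat) then c else d).

(* A pair (A, B) = (rho(a), rho(b)) of SL_2(C) matrices satisfying the
   Klein-bottle relation a b a^-1 = b^-1, i.e. a representation
   pi_1(K^2) -> SL_2(C). *)
Definition klein_rep (R : realType) (A B : 'M[R[i]]_2) : Prop :=
  \det A = 1 /\ \det B = 1 /\ A *m B *m invmx A = invmx B.

Definition mxconj (R : realType) (P M : 'M[R[i]]_2) : 'M[R[i]]_2 :=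
  P *m M *m invmx P.

Definition case1 (R : realType) (A B : 'M[R[i]]_2) : Prop :=
  B = 1%:M \/ B = - 1%:M.

Definition case2 (R : realType) (A B : 'M[R[i]]_2) : Prop :=
  exists lam : R[i], [/\ lam != 0, lam != 1, lam != -1,
    (B = mx2 lam 0 0 lam^-1 \/ B = - mx2 lam 0 0 lam^-1) &
    (A = mx2 0 1 (-1) 0 \/ A = - mx2 0 1 (-1) 0)].

Definition case3 (R : realType) (A B : 'M[R[i]]_2) : Prop :=
  (B = mx2 1 1 0 1 \/ B = - mx2 1 1 0 1) /\
  (A = mx2 'i 0 0 (- 'i) \/ A = - mx2 'i 0 0 (- 'i)).

Definition up_to_conj (R : realType)
    (C : 'M[R[i]]_2 -> 'M[R[i]]_2 -> Prop) (A B : 'M[R[i]]_2) : Prop :=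
  exists P : 'M[R[i]]_2, P \in unitmx /\ C (mxconj P A) (mxconj P B).

(* Main.v *)
Require Import Defs.
From HB Require Import structures.
From mathcomp Require Import all_boot all_order all_algebra.
From mathcomp Require Import complex reals.
From mathcomp Require Import ring lra.
Import Order.TTheory GRing.Theory Num.Theory.
Local Open Scope ring_scope.

Ltac fld := field; do ?[apply/andP; split]; try assumption.

Section S.
Variable R : realType.
Notation C := R[i].

Lemma sqrt_ex (x : C) : exists s : C, s ^+ 2 = x.
Proof.
have [s Hs] := @solve_monicpoly C 2 (nth 0 [:: x]) isT.
exists s; rewrite Hs !big_ord_recr big_ord0 /=; rewrite expr0 expr1; ring.
Qed.

Lemma mx2E (M : 'M[C]_2) : M = mx2 (M 0 0) (M 0 1) (M 1 0) (M 1 1).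
Proof.
apply/matrixP => i j; rewrite !mxE.
by case: i => [[|[|i]] Hi] //; case: j => [[|[|j]] Hj] //=;
  congr (M _ _); apply/val_inj.
Qed.

Lemma mx2_eq (a b c d a' b' c' d' : C) :
  mx2 a b c d = mx2 a' b' c' d' <-> [/\ a = a', b = b', c = c' & d = d'].
Proof.
split; last by case=> -> -> -> ->.
move=> /matrixP H.
have := H 0 0; have := H 0 1; have := H 1 0; have := H 1 1.
by rewrite !mxE /=.
Qed.

Lemma mulmx2 (a b c d a' b' c' d' : C) :
  mx2 a b c d *m mx2 a' b' c' d' =
  mx2 (a*a'+b*c') (a*b'+b*d') (c*a'+d*c') (c*b'+d*d').
Proof.
apply/matrixP => i j; rewrite !mxE !big_ord_recr big_ord0 /= !mxE /=.
by case: i => [[|[|i]] Hi] //; case: j => [[|[|j]] Hj] //=; rewrite add0r.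
Qed.

Lemma det_mx2 (a b c d : C) : \det (mx2 a b c d) = a * d - b * c.
Proof.
rewrite (expand_det_row _ ord0) !big_ord_recl big_ord0 /cofactor !det_mx11 !mxE /=.
rewrite !expr0 !exprS !expr0 /=. ring.
Qed.

Lemma tr_mx2 (a b c d : C) : \tr (mx2 a b c d) = a + d.
Proof. by rewrite /mxtrace !big_ord_recr big_ord0 /= !mxE /= add0r. Qed.

Lemma scalar_mx2 (x : C) : x%:M = mx2 x 0 0 x :> 'M_2.
Proof.
apply/matrixP => i j; rewrite !mxE.
by case: i => [[|[|i]] Hi] //; case: j => [[|[|j]] Hj] //=.
Qed.

Lemma opp_mx2 (a b c d : C) : - mx2 a b c d = mx2 (-a) (-b) (-c) (-d).
Proof.
apply/matrixP => i j; rewrite !mxE.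
by case: i => [[|[|i]] Hi] //; case: j => [[|[|j]] Hj] //=.
Qed.

Lemma unit_mx2 (a b c d : C) : (mx2 a b c d \in unitmx) = (a * d - b * c != 0).
Proof. by rewrite unitmxE det_mx2 unitfE. Qed.

Lemma inv_mx2 (a b c d : C) : a * d - b * c != 0 ->
  invmx (mx2 a b c d) = mx2 (d / (a*d-b*c)) (- b / (a*d-b*c)) (- c / (a*d-b*c)) (a / (a*d-b*c)).
Proof.
move=> H.
have U : mx2 a b c d \in unitmx by rewrite unit_mx2.
rewrite -[RHS]mul1mx -(mulVmx U) -mulmxA mulmx2.
have -> : mx2 (a * (d / (a * d - b * c)) + b * (- c / (a * d - b * c)))
     (a * (- b / (a * d - b * c)) + b * (a / (a * d - b * c)))
     (c * (d / (a * d - b * c)) + d * (- c / (a * d - b * c)))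
     (c * (- b / (a * d - b * c)) + d * (a / (a * d - b * c))) = 1%:M.
  by rewrite scalar_mx2; apply/mx2_eq; split; field.
by rewrite mulmx1.
Qed.


Lemma invmx_uniq2 (X Y : 'M[C]_2) : X *m Y = 1%:M -> invmx X = Y.
Proof.
move=> H; have [UX _] := mulmx1_unit H.
by rewrite -[RHS](mulKmx UX) H mulmx1.
Qed.

Lemma invmxM2 (P Q : 'M[C]_2) : P \in unitmx -> Q \in unitmx ->
  invmx (Q *m P) = invmx P *m invmx Q.
Proof.
move=> UP UQ; apply: invmx_uniq2.
by rewrite -mulmxA (mulmxA P) (mulmxV UP) mul1mx (mulmxV UQ).
Qed.

Lemma mxconj_comp (P Q M : 'M[C]_2) : P \in unitmx -> Q \in unitmx ->
  mxconj Q (mxconj P M) = mxconj (Q *m P) M.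
Proof. by move=> UP UQ; rewrite /mxconj invmxM2 // !mulmxA. Qed.

Lemma mxconjM (P X Y : 'M[C]_2) : P \in unitmx ->
  mxconj P X *m mxconj P Y = mxconj P (X *m Y).
Proof. by move=> UP; rewrite /mxconj !mulmxA (mulmxKV UP). Qed.

Lemma mxconj_det (P X : 'M[C]_2) : P \in unitmx -> \det (mxconj P X) = \det X.
Proof.
move=> UP; rewrite /mxconj !det_mulmx det_inv mulrC mulrA mulVr ?mul1r //.

Qed.

Lemma mxconj_tr (P X : 'M[C]_2) : P \in unitmx -> \tr (mxconj P X) = \tr X.
Proof. by move=> UP; rewrite /mxconj mxtrace_mulC mulmxA (mulVmx UP) mul1mx. Qed.

Lemma mxconj_scalar (P : 'M[C]_2) x : P \in unitmx -> mxconj P x%:M = x%:M.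
Proof. by move=> UP; rewrite /mxconj scalar_mxC -mulmxA (mulmxV UP) mulmx1. Qed.

Lemma mxconjN (P X : 'M[C]_2) : mxconj P (- X) = - mxconj P X.
Proof. by rewrite /mxconj mulmxN mulNmx. Qed.

Lemma mxconj_inv (P X : 'M[C]_2) : P \in unitmx -> mxconj (invmx P) (mxconj P X) = X.
Proof.
move=> UP; rewrite mxconj_comp ?unitmx_inv // (mulVmx UP) /mxconj invmx1.
by rewrite mul1mx mulmx1.
Qed.

Lemma mxconj1 (X : 'M[C]_2) : mxconj 1%:M X = X.
Proof. by rewrite /mxconj invmx1 mul1mx mulmx1. Qed.

Definition K (A B : 'M[C]_2) := [/\ \det A = 1, \det B = 1 & B *m A *m B = A].

Lemma klein_K A B : klein_rep A B -> K A B.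
Proof.
case=> dA [dB H]; split => //.
have UA : A \in unitmx by rewrite unitmxE dA unitr1.
have UB : B \in unitmx by rewrite unitmxE dB unitr1.
have H2 : A *m B = invmx B *m A by rewrite -H (mulmxKV UA).
by rewrite -mulmxA H2 mulmxA (mulmxV UB) mul1mx.
Qed.

Lemma K_conj P A B : P \in unitmx -> K A B -> K (mxconj P A) (mxconj P B).
Proof.
move=> UP [dA dB H]; split; rewrite ?mxconj_det //.
by rewrite !mxconjM // H.
Qed.

Lemma conj_trans (Cs : _ -> _ -> Prop) P (A B : 'M[C]_2) : P \in unitmx ->
  @up_to_conj R Cs (mxconj P A) (mxconj P B) -> up_to_conj Cs A B.
Proof.
move=> UP [Q [UQ HC]]; exists (Q *m P); split; first by rewrite unitmx_mul UQ.
by rewrite -!mxconj_comp.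
Qed.

Lemma quad_root (a b c : C) : a != 0 -> exists y, a * y ^+ 2 + b * y + c = 0.
Proof.
move=> a0.
have [y Hy] := @solve_monicpoly C 2 (nth 0 [:: - c / a; - b / a]) isT.
exists y; move: Hy; rewrite !big_ord_recr big_ord0 /= expr0 expr1 add0r => Hy.
have -> : a * y ^+ 2 + b * y + c = a * (y ^+ 2 - (- c / a * 1 + - b / a * y)) by field.
by rewrite Hy subrr mulr0.
Qed.


Lemma mx2_10 (a b c d : C) : (mx2 a b c d) 1 0 = c.
Proof. by rewrite mxE. Qed.
Arguments mx2_10 {a b c d}.

Lemma triang (b1 b2 b3 b4 : C) : exists P : 'M[C]_2, P \in unitmx /\ (mxconj P (mx2 b1 b2 b3 b4)) 1 0 = 0.
Proof.
have [b20|b20] := eqVneq b2 0.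
  have D : (0 : C) * 0 - 1 * (-1) = 1 by ring.
  exists (mx2 0 1 (-1) 0); split; first by rewrite unit_mx2 D oner_neq0.
  rewrite /mxconj inv_mx2 ?D ?oner_neq0 // !mulmx2 mx2_10; rewrite b20.
  by field.
have [y Hy] := @quad_root b2 (b4 - b1) (- b3) b20.
have D : (1 : C) * 1 - 0 * y = 1 by ring.
exists (mx2 1 0 y 1); split; first by rewrite unit_mx2 D oner_neq0.
rewrite /mxconj inv_mx2 ?D ?oner_neq0 // !mulmx2 mx2_10.
rewrite -[RHS]oppr0 -Hy; by field.
Qed.

Lemma conj_mx2 (p q r s a b c d : C) : p * s - q * r = 1 ->
  mxconj (mx2 p q r s) (mx2 a b c d) =
  mx2 p q r s *m mx2 a b c d *m mx2 s (-q) (-r) p.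
Proof. by move=> H; rewrite /mxconj inv_mx2 H ?oner_neq0 // !divr1. Qed.

Lemma step_diag (A : 'M[C]_2) (l : C) : l != 0 -> l ^+ 2 != 1 ->
  K A (mx2 l 0 0 l^-1) -> up_to_conj (@case2 R) A (mx2 l 0 0 l^-1).
Proof.
move=> l0 l2 [dA _ H].
move: dA H; rewrite [A]mx2E; move: (A 0 0) (A 0 1) (A 1 0) (A 1 1) => a1 a2 a3 a4.
rewrite det_mx2 !mulmx2 => dA /mx2_eq [H1 H2 H3 H4].
have H1' : a1 * l ^+ 2 = a1 by rewrite -[RHS]H1; ring.
have H4' : a4 / l ^+ 2 = a4 by rewrite -[RHS]H4; field.
have H4'' : a4 * l ^+ 2 = a4 by rewrite -{1}H4'; field.
have l21 : l ^+ 2 - 1 != 0 by rewrite subr_eq0.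
have E1 : a1 = 0.
  have : a1 * (l ^+ 2 - 1) = 0 by rewrite mulrBr mulr1 H1' subrr.
  by move/eqP; rewrite mulf_eq0 (negbTE l21) orbF => /eqP.
have E4 : a4 = 0.
  have : a4 * (l ^+ 2 - 1) = 0 by rewrite mulrBr mulr1 H4'' subrr.
  by move/eqP; rewrite mulf_eq0 (negbTE l21) orbF => /eqP.
subst a1 a4.
have a20 : a2 != 0 by apply/eqP => E; move: dA; rewrite E !mul0r subrr => /eqP; rewrite eq_sym oner_eq0.
have [d Hd] := sqrt_ex (a2^-1).
have d0 : d != 0 by apply/eqP => E; move: Hd; rewrite E expr0n /= => /esym /eqP; rewrite invr_eq0 (negbTE a20).
have Ea2 : a2 = (d ^+ 2)^-1 by rewrite Hd invrK.
have Ea3 : a3 = - d ^+ 2 by rewrite Hd; apply/(mulfI a20); rewrite mulrN mulfV // -dA; ring.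
subst a2 a3.
have D : d * d^-1 - 0 * 0 = 1 by field.
exists (mx2 d 0 0 d^-1); split; first by rewrite unit_mx2 D oner_neq0.
exists l; split => //.
- by apply: contra l2 => /eqP ->; rewrite expr1n.
- by apply: contra l2 => /eqP ->; rewrite sqrrN expr1n.
- left; rewrite conj_mx2 // !mulmx2; apply/mx2_eq; split; by fld.
- left; rewrite conj_mx2 // !mulmx2; apply/mx2_eq; split; by fld.
Qed.

Lemma step_unip (A : 'M[C]_2) (l : C) : (l = 1 \/ l = -1) ->
  K A (mx2 l l 0 l) -> up_to_conj (@case3 R) A (mx2 l l 0 l).
Proof.
move=> Hl [dA _ H].
move: dA H; rewrite [A]mx2E; move: (A 0 0) (A 0 1) (A 1 0) (A 1 1) => a1 a2 a3 a4.
rewrite det_mx2 !mulmx2 => dA /mx2_eq [H1 H2 H3 H4].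
have H2n : (2 : C) != 0 by rewrite pnatr_eq0.
have Hi : 'i != 0 :> C := @neq0Ci _.
have Hmi : - 'i != 0 :> C by rewrite oppr_eq0.
case: Hl => El; subst l.
all: have E3 : a3 = 0 by apply/(addrI a1); rewrite addr0 -[RHS]H1; ring.
all: subst a3.
all: have H2' : a1 + a2 + a4 = a2 by rewrite -[RHS]H2; ring.
all: have E4 : a4 = - a1 by rewrite -(addKr (a1 + a2) a4) H2'; ring.
all: subst a4.
all: have Ei : (a1 - 'i) * (a1 + 'i) = 0 by
  rewrite (_ : (a1 - 'i) * (a1 + 'i) = - (a1 * - a1 - a2 * 0) - 'i ^+ 2);
  [rewrite dA sqrCi subrr | ring].
all: have a10 : a1 != 0 by
  apply/eqP => E; move: dA; rewrite E mul0r mulr0 subrr => /eqP; rewrite eq_sym oner_eq0.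
all: have D : 1 * 1 - (a2 / (2 * a1)) * 0 = 1 by ring.
all: exists (mx2 1 (a2 / (2 * a1)) 0 1); split; first by rewrite unit_mx2 D oner_neq0.
all: rewrite /case3 !conj_mx2 // !mulmx2 !opp_mx2.
all: split; first by [left; apply/mx2_eq; split; by fld | right; apply/mx2_eq; split; by fld].
all: move/eqP: Ei; rewrite mulf_eq0 subr_eq0 addr_eq0 => /orP [] /eqP ->.
all: first [left; apply/mx2_eq; split; rewrite ?opprK; by fld
           | right; apply/mx2_eq; split; rewrite ?opprK; by fld].
Qed.

Lemma step_upper (A : 'M[C]_2) (l x : C) : l != 0 -> K A (mx2 l x 0 l^-1) ->
  up_to_conj (@case1 R) A (mx2 l x 0 l^-1) \/
  up_to_conj (@case2 R) A (mx2 l x 0 l^-1) \/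
  up_to_conj (@case3 R) A (mx2 l x 0 l^-1).
Proof.
move=> l0 HK.
have [l2|l2] := eqVneq (l ^+ 2) 1.
  have Hl : l = 1 \/ l = -1.
    have : (l - 1) * (l + 1) = 0.
      have -> : (l - 1) * (l + 1) = l ^+ 2 - 1 by ring.
      by rewrite l2 subrr.
    by move/eqP; rewrite mulf_eq0 subr_eq0 addr_eq0 => /orP [] /eqP; [left|right].
  have li : l^-1 = l by rewrite -[l^-1]mulr1 -l2 expr2 mulKf.
  rewrite li in HK *.
  have [x0|x0] := eqVneq x 0.
    left; exists 1%:M; split; first exact: unitmx1.
    rewrite !mxconj1 /case1 x0 scalar_mx2 opp_mx2 oppr0.
    by case: Hl => ->; [left|right].
  have D : 1 * (x / l) - 0 * 0 != 0 by rewrite mul1r mulr0 subr0 mulf_neq0 // invr_eq0.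
  have UP : mx2 1 0 0 (x / l) \in unitmx by rewrite unit_mx2.
  right; right; apply: (conj_trans _ _ _ _ UP).
  have E : mxconj (mx2 1 0 0 (x / l)) (mx2 l x 0 l) = mx2 l l 0 l.
    rewrite /mxconj inv_mx2 // !mulmx2; apply/mx2_eq; split; by fld.
  rewrite E; apply: step_unip Hl _.
  by rewrite -E; apply: K_conj.
right; left.
have lm : l - l^-1 != 0.
  apply: contra l2; rewrite subr_eq0 => /eqP E.
  by rewrite expr2 {2}E mulfV.
have D : 1 * 1 - x / (l - l^-1) * 0 = 1 by ring.
have UP : mx2 1 (x / (l - l^-1)) 0 1 \in unitmx by rewrite unit_mx2 D oner_neq0.
apply: (conj_trans _ _ _ _ UP).
have E : mxconj (mx2 1 (x / (l - l^-1)) 0 1) (mx2 l x 0 l^-1) = mx2 l 0 0 l^-1.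
  have l2' : l * l - 1 != 0 by rewrite subr_eq0 -expr2.
  rewrite conj_mx2 // !mulmx2; apply/mx2_eq; split; by fld.
rewrite E; apply: step_diag => //.
by rewrite -E; apply: K_conj.
Qed.

Lemma existence (A B : 'M[C]_2) : K A B ->
  up_to_conj (@case1 R) A B \/ up_to_conj (@case2 R) A B \/ up_to_conj (@case3 R) A B.
Proof.
move=> HK.
have [P [UP HP]] := triang (B 0 0) (B 0 1) (B 1 0) (B 1 1).
rewrite -mx2E in HP.
have HK' := K_conj _ _ _ UP HK.
have EB : mxconj P B = mx2 (mxconj P B 0 0) (mxconj P B 0 1) 0 (mxconj P B 1 1).
  by rewrite -HP -mx2E.
move: EB; move: (mxconj P B 0 0) (mxconj P B 0 1) (mxconj P B 1 1) => l x m EB.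
rewrite EB in HK'.
have dB : l * m - x * 0 = 1 by case: HK' => _; rewrite det_mx2.
have l0 : l != 0 by apply/eqP => E; move: dB; rewrite E mul0r mulr0 subrr => /eqP; rewrite eq_sym oner_eq0.
have Em : m = l^-1.
  by move: dB; rewrite mulr0 subr0 => dB; rewrite -[m](mulKf l0) dB mulr1.
subst m.
have [H|[H|H]] := step_upper _ _ _ l0 HK'; rewrite -EB in H.
- by left; apply: (conj_trans _ _ _ _ UP).
- by right; left; apply: (conj_trans _ _ _ _ UP).
- by right; right; apply: (conj_trans _ _ _ _ UP).
Qed.

Lemma pm_eq (t x y : C) : (t = x \/ t = - x) -> (t = y \/ t = - y) -> x = y \/ x = - y.
Proof.
case=> ->; case=> E; [left|right|right|left] => //.
- by rewrite -E opprK.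
- exact: oppr_inj.
Qed.

Lemma c1_B (A B : 'M[C]_2) : up_to_conj (@case1 R) A B ->
  forall Q, Q \in unitmx -> mxconj Q B = mx2 1 0 0 1 \/ mxconj Q B = - mx2 1 0 0 1.
Proof.
case=> P [UP HP] Q UQ.
have EB : B = mxconj (invmx P) (mxconj P B) by rewrite mxconj_inv.
rewrite -scalar_mx2.
case: HP => HP; rewrite HP in EB; rewrite EB ?mxconjN mxconj_scalar ?unitmx_inv //;
  rewrite ?mxconjN mxconj_scalar //; by [left|right].
Qed.

Lemma lam_eq (lam : C) : lam != 0 -> lam + lam^-1 = 1 + 1 \/ lam + lam^-1 = - (1 + 1) ->
  lam = 1 \/ lam = -1.
Proof.
move=> l0 [] E.
  left; have : (lam - 1) ^+ 2 = 0.
    have -> : (lam - 1) ^+ 2 = lam * (lam + lam^-1 - (1 + 1)) by fld.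
    by rewrite E subrr mulr0.
  by move/eqP; rewrite expf_eq0 /= subr_eq0 => /eqP.
right; have : (lam + 1) ^+ 2 = 0.
  have -> : (lam + 1) ^+ 2 = lam * (lam + lam^-1 + (1 + 1)) by fld.
  by rewrite E addNr mulr0.
by move/eqP; rewrite expf_eq0 /= addr_eq0 => /eqP.
Qed.

Lemma exclusive (A B : 'M[C]_2) :
  let c1 := up_to_conj (@case1 R) A B in
  let c2 := up_to_conj (@case2 R) A B in
  let c3 := up_to_conj (@case3 R) A B in
  ~ (c1 /\ c2) /\ ~ (c1 /\ c3) /\ ~ (c2 /\ c3).
Proof.
split; [|split].
- case=> H1 [Q [UQ [lam [l0 l1 l2 HB _]]]].
  have := c1_B _ _ H1 _ UQ.
  have T2 : mxconj Q B 0 0 = lam \/ mxconj Q B 0 0 = - lam.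
    by case: HB => ->; [left|right]; rewrite !mxE.
  move=> T1'.
  have T1 : mxconj Q B 0 0 = 1 \/ mxconj Q B 0 0 = - 1.
    by case: T1' => ->; [left|right]; rewrite !mxE.
  case: (pm_eq _ _ _ T2 T1) => E.
    by move: l1; rewrite E eqxx.
  by move: l2; rewrite E eqxx.
- case=> H1 [Q [UQ [HB _]]].
  have := c1_B _ _ H1 _ UQ.
  have T2 : mxconj Q B 0 1 = 1 \/ mxconj Q B 0 1 = - 1.
    by case: HB => ->; [left|right]; rewrite !mxE.
  move=> T1'.
  have T1 : mxconj Q B 0 1 = 0 \/ mxconj Q B 0 1 = - 0.
    by case: T1' => ->; [left|right]; rewrite !mxE.
  case: (pm_eq _ _ _ T2 T1) => /eqP; rewrite ?oppr0 ?oner_eq0 //.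
- case=> [[Q [UQ [lam [l0 l1 l2 HB _]]]] [Q' [UQ' [HB' _]]]].
  have T2 : \tr B = lam + lam^-1 \/ \tr B = - (lam + lam^-1).
    rewrite -(mxconj_tr _ _ UQ).
    by case: HB => ->; [left|right]; rewrite ?opp_mx2 tr_mx2 ?opprD.
  have T1 : \tr B = 1 + 1 \/ \tr B = - (1 + 1).
    rewrite -(mxconj_tr _ _ UQ').
    by case: HB' => ->; [left|right]; rewrite ?opp_mx2 tr_mx2 ?opprD.
  case: (lam_eq _ l0 (pm_eq _ _ _ T2 T1)) => E.
    by move: l1; rewrite E eqxx.
  by move: l2; rewrite E eqxx.
Qed.

End S.

Theorem lemma4p1 (R : realType) (A B : 'M[R[i]]_2) :
  klein_rep A B ->
  let c1 := up_to_conj (@case1 R) A B in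
  let c2 := up_to_conj (@case2 R) A B in
  let c3 := up_to_conj (@case3 R) A B in
  (c1 \/ c2 \/ c3) /\ ~ (c1 /\ c2) /\ ~ (c1 /\ c3) /\ ~ (c2 /\ c3).
Proof.
move=> HK; split; first by apply: existence; apply: klein_K.
exact: exclusive.
Qed.
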